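(* Let $H$ be a real Hilbert space, $A:H\to c_0$ bounded linear with adjoint $A^*:\ell^1\to H$ (identifying $c_0^*=\ell^1$). Let $(H_n)_{n\in\mathbb N}$ be subspaces of $H$ with $\dim H_n=n$ such that the orthogonal projections $P_n$ onto $H_n$ satisfy $P_nv\to v$ for all $v\in H$, and assume $\mathcal N(A)\cap H_n=\{0\}$ for all $n$. Let $f\in H$ be such that $A^*u=f$ has a solution in $\ell^1$, and assume $$\forall z\in H:\quad \inf_{z^n\in H_n}\|A(z-z^n)\|_\infty\to0\ \text{ as } n\to\infty.$$ Then: (a) If for each $n$, $u^{\dagger,n}$ is a solution of $\min\{\|u\|_1: u\in\ell^1,\ \langle z,A^*u\rangle=\langle z,f\rangle\ \forall z\in H_n\}$, then $(u^{\dagger,n})_n$ has a subsequence converging in the $\ell^1$-norm to a solution of $A^*u=f$. (b) Let $n_{AP}:(0,\infty)\to\mathbb N$ satisfy $n_{AP}(\delta)\to\infty$ and $\delta\kappa_{n_{AP}(\delta)}\to0$ as $\delta\to0$. Let $(\delta_m)_m\subset(0,\infty)$ converge to $0$, let $f^{\delta_m}\in H$ with $\|f^{\delta_m}-f\|\le\delta_m$, and let $u^m$ be a solution of $\min\{\|u\|_1: u\in\ell^1,\ \langle z,A^*u\rangle=\langle z,f^{\delta_m}\rangle\ \forall z\in H_{n_{AP}(\delta_m)}\}$. Then there is a subsequence $(u^{l})_l$ of $(u^m)_m$ and a solution $u^\dagger$ of $A^*u=f$ with $\|u^l-u^\dagger\|_1\to0$.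
   Context: $A^*$ is defined by $\langle A^*u,z\rangle=\sum_iu_i(Az)_i$. $\kappa_n=\sup_{z\in H_n\setminus\{0\}}\|z\|/\|Az\|_\infty$. *)

(* Defs.v *)
From HB Require Import structures.
From mathcomp Require Import all_boot all_order all_algebra.
From mathcomp Require Import all_classical all_reals all_analysis.
Set Implicit Arguments. Unset Strict Implicit. Unset Printing Implicit Defensive.
Import Order.TTheory GRing.Theory Num.Theory.
Import numFieldNormedType.Exports.
Local Open Scope classical_set_scope.
Local Open Scope ring_scope.

Section Defs.
Variable R : realType.

Definition is_l1 (u : nat -> R) : Prop := cvgn (series (fun i => `|u i|)).
Definition l1norm (u : nat -> R) : R := limn (series (fun i => `|u i|)).
Definition is_c0 (x : nat -> R) : Prop := x n @[n --> \oo] --> 0.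
Definition supnorm (x : nat -> R) : R := sup (range (fun i => `|x i|)).
Definition pairing (u x : nat -> R) : R := limn (series (fun i => u i * x i)).

Variable H : completeNormedModType R.

Definition hilbert_inner_product (ip : H -> H -> R) : Prop :=
  [/\ forall x y, ip x y = ip y x,
      forall (a : R) x y z, ip (a *: x + y) z = a * ip x z + ip y z
    & forall x, ip x x = `|x| ^+ 2].

Definition bounded_linear_to_c0 (A : H -> nat -> R) : Prop :=
  [/\ forall (a : R) x y, A (a *: x + y) = (fun i => a * A x i + A y i),
      forall z, is_c0 (A z)
    & exists C : R, forall z i, `|A z i| <= C * `|z|].

Definition is_adjoint (ip : H -> H -> R) (A : H -> nat -> R)
  (Astar : (nat -> R) -> H) : Prop :=
  forall u, is_l1 u -> forall z, ip (Astar u) z = pairing u (A z).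

Definition subspace_of_dim (S : set H) (n : nat) : Prop :=
  exists e : 'I_n -> H,
    (forall c : 'I_n -> R, \sum_(i < n) c i *: e i = 0 -> forall i, c i = 0) /\
    S = [set \sum_(i < n) c i *: e i | c in [set: 'I_n -> R]].

Definition is_orth_proj (ip : H -> H -> R) (S : set H) (P : H -> H) : Prop :=
  forall v, S (P v) /\ (forall w, S w -> ip (v - P v) w = 0).

Definition kappa (A : H -> nat -> R) (Hn : nat -> set H) (n : nat) : R :=
  sup [set `|z| / supnorm (A z) | z in Hn n `\ 0].

Definition is_min_l1_solution (ip : H -> H -> R) (Astar : (nat -> R) -> H)
  (S : set H) (g : H) (u : nat -> R) : Prop :=
  [/\ is_l1 u,
      (forall z, S z -> ip z (Astar u) = ip z g)
    & forall v, is_l1 v -> (forall z, S z -> ip z (Astar v) = ip z g) ->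
        l1norm u <= l1norm v].

End Defs.

(* Main.v *)
Require Import Defs.
From HB Require Import structures.
From mathcomp Require Import all_boot all_order all_algebra.
From mathcomp Require Import all_classical all_reals all_analysis.
From mathcomp Require Import ring lra.
Set Implicit Arguments. Unset Strict Implicit. Unset Printing Implicit Defensive.
Import Order.TTheory GRing.Theory Num.Theory.
Import numFieldNormedType.Exports.
Local Open Scope classical_set_scope.
Local Open Scope ring_scope.
Section L1.
Variable R : realType.
Implicit Types (u v x : nat -> R).

Definition psum u N : R := \sum_(0 <= i < N) `|u i|.

Lemma psumE u N : series (fun i => `|u i|) N = psum u N.
Proof. by []. Qed.

Lemma psum_ge0 u N : 0 <= psum u N.
Proof. by apply: sumr_ge0 => i _. Qed.

Lemma psum_nd u : nondecreasing_seq (psum u).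
Proof.
move=> m n mn; rewrite /psum (big_cat_nat (leq0n m) mn) /= lerDl.
by apply: sumr_ge0.
Qed.

Lemma psum_split u N M : (N <= M)%N -> psum u M = psum u N + \sum_(N <= i < M) `|u i|.
Proof. by move=> NM; rewrite /psum (big_cat_nat (leq0n N) NM). Qed.

Lemma l1P u : is_l1 u <-> exists B, forall N, psum u N <= B.
Proof.
split.
  move=> /cvg_has_ub [B HB]; exists B => N.
  apply: le_trans (HB _ _); last by exists N.
  by rewrite -psumE ler_norm.
move=> [B HB]; apply: nondecreasing_is_cvgn; first exact: psum_nd.
by exists B => _ [N _ <-]; apply: HB.
Qed.

Lemma psum_le_l1 u N : is_l1 u -> psum u N <= l1norm u.
Proof. by move=> hu; apply: (nondecreasing_cvgn_le (psum_nd u) hu). Qed.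

Lemma l1_le u (B : R) : (forall N, psum u N <= B) -> l1norm u <= B.
Proof.
move=> HB; have hu : is_l1 u by apply/l1P; exists B.
by apply: limr_le => //; near=> N; apply: HB.
Unshelve. all: by end_near. Qed.

Lemma l1norm_ge0 u : is_l1 u -> 0 <= l1norm u.
Proof. by move=> hu; apply: le_trans (psum_le_l1 0 hu); apply: psum_ge0. Qed.

Lemma psum_cvg u : is_l1 u -> psum u N @[N --> \oo] --> l1norm u.
Proof. by move=> hu; apply: hu. Qed.

Lemma coord_le_psum u i : `|u i| <= psum u i.+1.
Proof.
rewrite /psum big_nat_recr //= lerDr; by apply: sumr_ge0.
Qed.

Lemma coord_le_l1 u i : is_l1 u -> `|u i| <= l1norm u.
Proof. by move=> hu; apply: le_trans (coord_le_psum u i) (psum_le_l1 _ hu). Qed.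

Lemma supnorm_ge x (B : R) i : (forall j, `|x j| <= B) -> `|x i| <= supnorm x.
Proof.
move=> HB; apply: (ub_le_sup); last by exists i.
by exists B => _ [j _ <-].
Qed.

Lemma supnorm_le x (B : R) : (forall j, `|x j| <= B) -> supnorm x <= B.
Proof.
move=> HB; apply: ge_sup; first by exists `|x 0%N|, 0%N.
by move=> _ [j _ <-].
Qed.

Lemma supnorm_ge0 x : 0 <= supnorm x.
Proof.
have [[B HB]|nb] := pselect (exists B, forall j, `|x j| <= B).
  exact: le_trans (normr_ge0 _) (supnorm_ge 0 HB).
rewrite /supnorm sup_out //; move=> [_ [B HB]]; apply: nb; exists B => j.
by apply: HB; exists j.
Qed.

Lemma c0_bounded x : is_c0 x -> exists B : R, forall j, `|x j| <= B.
Proof.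
move=> /cvgP/cvg_has_ub [B HB]; exists B => j.
by apply: HB; exists j.
Qed.

Lemma c0_supnorm x i : is_c0 x -> `|x i| <= supnorm x.
Proof. by move=> /c0_bounded [B HB]; apply: supnorm_ge HB. Qed.

Lemma l1_add u v : is_l1 u -> is_l1 v -> is_l1 (fun i => u i + v i).
Proof.
move=> hu hv; apply/l1P; exists (l1norm u + l1norm v) => N.
apply: le_trans (lerD (psum_le_l1 N hu) (psum_le_l1 N hv)).
rewrite /psum -big_split /=; apply: ler_sum => i _; exact: ler_normD.
Qed.

Lemma l1_scale a u : is_l1 u -> is_l1 (fun i => a * u i).
Proof.
move=> hu; apply/l1P; exists (`|a| * l1norm u) => N.
rewrite /psum (eq_bigr (fun i => `|a| * `|u i|)); last by move=> i _; rewrite normrM.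
by rewrite -mulr_sumr; apply: ler_wpM2l => //; apply: psum_le_l1.
Qed.

Lemma l1_sub u v : is_l1 u -> is_l1 v -> is_l1 (fun i => u i - v i).
Proof.
move=> hu hv; have := l1_add hu (l1_scale (a:=-1) hv).
by congr is_l1; apply/funext => i; rewrite mulN1r.
Qed.

Lemma pairing_cvg u x (B : R) : is_l1 u -> (forall i, `|x i| <= B) ->
  cvgn (series (fun i => u i * x i)).
Proof.
move=> hu hx; apply: normed_cvg.
apply: (@series_le_cvg _ _ (fun i => B * `|u i|)).
- by move=> n /=.
- by move=> n; apply: mulr_ge0 => //; apply: le_trans (hx 0%N).
- by move=> n /=; rewrite normrM mulrC ler_wpM2r.
- have -> : (fun i => B * `|u i|) = B *: (fun i => `|u i|) by [].
  by apply: is_cvg_seriesZ; apply: hu.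
Qed.

Lemma pairing_tail u x (B K : R) N : is_l1 u -> (forall i, `|x i| <= B) ->
  (forall i, (N <= i)%N -> `|x i| <= K) ->
  `|pairing u x - \sum_(0 <= i < N) u i * x i| <= (l1norm u - psum u N) * K.
Proof.
move=> hu hx hK.
have hc := pairing_cvg hu hx.
have K0 : 0 <= K by exact: le_trans (normr_ge0 _) (hK N (leqnn N)).
have key : forall n, (N <= n)%N ->
    `|series (fun i => u i * x i) n - \sum_(0 <= i < N) u i * x i| <=
      (l1norm u - psum u N) * K.
  move=> n Nn; rewrite /series /= (big_cat_nat (leq0n N) Nn) /= addrAC subrr add0r.
  apply: le_trans (ler_norm_sum _ _ _) _.
  apply: (@le_trans _ _ (\sum_(N <= i < n) `|u i| * K)).
    apply: ler_sum_nat => i /andP[Ni _]; rewrite normrM ler_wpM2l //.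
    exact: hK.
  rewrite -mulr_suml ler_wpM2r // lerBrDl -psum_split //.
  exact: psum_le_l1.
rewrite ler_distl; apply/andP; split.
  apply: limr_ge => //; near=> n.
  have /key : (N <= n)%N by near: n; exact: nbhs_infty_ge.
  by rewrite ler_distl => /andP[].
apply: limr_le => //; near=> n.
have /key : (N <= n)%N by near: n; exact: nbhs_infty_ge.
by rewrite ler_distl => /andP[].
Unshelve. all: by end_near. Qed.

Lemma pairing_bound u x (B : R) : is_l1 u -> (forall i, `|x i| <= B) ->
  `|pairing u x| <= l1norm u * B.
Proof.
move=> hu hx; have := @pairing_tail u x B B 0%N hu hx (fun i _ => hx i).
by rewrite big_geq // subr0 /psum big_geq // subr0.
Qed.

Lemma pairing_linx u x y a (Bx By : R) : is_l1 u -> (forall i, `|x i| <= Bx) ->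
  (forall i, `|y i| <= By) ->
  pairing u (fun i => a * x i + y i) = a * pairing u x + pairing u y.
Proof.
move=> hu hx hy; rewrite /pairing /=.
have -> : (fun i => u i * (a * x i + y i)) =
   a *: (fun i => u i * x i) + (fun i => u i * y i).
  by apply/funext => i /=; rewrite !fctE mulrDr mulrCA.
rewrite lim_seriesD; last 2 first.
- by apply: is_cvg_seriesZ; apply: pairing_cvg hx.
- exact: pairing_cvg hy.
by rewrite lim_seriesZ //; apply: pairing_cvg hx.
Qed.

Lemma pairing_linu u v x a (B : R) : is_l1 u -> is_l1 v -> (forall i, `|x i| <= B) ->
  pairing (fun i => a * u i + v i) x = a * pairing u x + pairing v x.
Proof.
move=> hu hv hx; rewrite /pairing /=.
have -> : (fun i => (a * u i + v i) * x i) =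
   a *: (fun i => u i * x i) + (fun i => v i * x i).
  by apply/funext => i /=; rewrite !fctE mulrDl -mulrA.
rewrite lim_seriesD; last 2 first.
- by apply: is_cvg_seriesZ; apply: pairing_cvg hx.
- exact: pairing_cvg hx.
by rewrite lim_seriesZ //; apply: pairing_cvg hx.
Qed.

End L1.

Section Diag.
Variable R : realType.

Definition sincr (f : nat -> nat) := forall k l, (k < l)%N -> (f k < f l)%N.

Lemma sincr_ge f : sincr f -> forall k, (k <= f k)%N.
Proof.
move=> hf; elim=> // k IH; apply: leq_ltn_trans IH _; exact: hf.
Qed.

Lemma sincr_comp f g : sincr f -> sincr g -> sincr (f \o g).
Proof. by move=> hf hg k l kl; apply: hf; apply: hg. Qed.

Lemma incr_sincr f : increasing_seq f -> sincr f.
Proof.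
move=> hf k l kl; rewrite ltn_neqAle; apply/andP; split; last first.
  exact: (etrans (hf k l) (ltnW kl)).
apply/negP => /eqP e; have : (l <= k)%N by rewrite -(hf l k) e lexx.
by rewrite leqNgt kl.
Qed.

Fixpoint Phi (G : (nat -> R) -> nat -> nat) (s : nat -> nat -> R) (j : nat) : nat -> nat :=
  if j is j'.+1 then Phi G s j' \o G (fun k => s (Phi G s j' k) j') else id.

Lemma sincr_le_cvg (g : nat -> R) (L : R) (h : nat -> R) (i : nat) (y : nat -> nat) :
  g m @[m --> \oo] --> L -> (forall k, (i <= k)%N -> (k <= y k)%N /\ h k = g (y k)) ->
  h @ \oo --> L.
Proof.
move=> /cvgrPdist_le hg hy; apply/cvgrPdist_le => e e0.
have [N0 _ HN0] := hg e e0.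
exists (maxn N0 i) => // k /=; rewrite geq_max => /andP[N0k ik].
have [ky ->] := hy k ik; apply: HN0 => /=.
exact: leq_trans N0k ky.
Qed.

Lemma diag (s : nat -> nat -> R) (M : R) : (forall k i, `|s k i| <= M) ->
  exists phi : nat -> nat, sincr phi /\ forall i, cvgn (fun k => s (phi k) i).
Proof.
move=> hM.
have BW : forall t : nat -> R, exists psi : nat -> nat,
    sincr psi /\ (bounded_fun t -> cvgn (t \o psi)).
  move=> t; have [bt|nbt] := pselect (bounded_fun t).
    have [psi hpsi hc] := bolzano_weierstrass bt.
    by exists psi; split; [exact: incr_sincr | move=> _].
  by exists id; split => // k l.
have [G HG] := choice BW.
pose P := Phi G s.
have Pinc : forall j k l, (k < l)%N -> (P j k < P j l)%N.
  move=> j; elim: j => [|j IH] a b ab; first by [].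
  by rewrite /=; apply: IH; apply: (HG _).1.
have Psub : forall a b, (a <= b)%N -> forall x, exists y, (x <= y)%N /\ P b x = P a y.
  move=> a b ab; elim: b ab => [|b IH] ab x.
    by move: ab; rewrite leqn0 => /eqP ->; exists x.
  move: ab; rewrite leq_eqVlt => /orP[/eqP ->|ab]; first by exists x.
  have [y [hy ey]] := IH ab (G (fun k => s (P b k) b) x).
  exists y; split; last by rewrite /= -ey.
  apply: leq_trans hy; apply: sincr_ge; exact: (HG _).1.
have Pcvg : forall j, cvgn (fun k => s (P j.+1 k) j).
  move=> j; have := (HG (fun k => s (P j k) j)).2; apply.
  exists M; split; first by rewrite num_real.
  by move=> x Mx k _; apply: le_trans (ltW Mx); apply: hM.
exists (fun k => P k k); split.
  move=> k l kl; elim: l kl => // l IH.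
  rewrite ltnS leq_eqVlt => /orP[/eqP ->|kl].
    rewrite /=; apply: Pinc; apply: leq_trans (sincr_ge (HG _).1 _); exact: ltnSn.
  apply: ltn_trans (IH kl) _.
  rewrite /=; apply: Pinc; apply: leq_trans (sincr_ge (HG _).1 _); exact: ltnSn.
move=> i.
pose y := fun k => if (i.+1 <= k)%N then
   (if pselect (exists y, (k <= y)%N /\ P k k = P i.+1 y) is left h then projT1 (cid h) else k)
   else k.
apply: cvgP; apply: (@sincr_le_cvg (fun m => s (P i.+1 m) i) _ (fun k => s (P k k) i) i.+1 y).
  exact: (Pcvg i).
move=> k ik; rewrite /y ik.
case: pselect => [h|n]; last by exfalso; apply: n; apply: Psub.
by case: (cid h) => z [hz ez] /=; rewrite ez.
Qed.

End Diag.

Section SumCvg.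
Variable R : realType.

Lemma sum_cvg (F : nat -> nat -> R) (G : nat -> R) N :
  (forall i, F k i @[k --> \oo] --> G i) ->
  \sum_(0 <= i < N) F k i @[k --> \oo] --> \sum_(0 <= i < N) G i.
Proof.
move=> hF; elim: N => [|N IH].
  under eq_fun do rewrite big_geq //.
  by rewrite big_geq //; exact: cvg_cst.
under eq_fun do rewrite big_nat_recr //=.
by rewrite big_nat_recr //=; apply: cvgD => //; apply: hF.
Qed.

Lemma cvg_subseq (g : nat -> R) (l : R) (phi : nat -> nat) :
  g @ \oo --> l -> sincr phi -> (fun k => g (phi k)) @ \oo --> l.
Proof.
move=> hg hphi; apply: (@sincr_le_cvg _ g l _ 0 phi) => // k _; split => //.
exact: sincr_ge.
Qed.

End SumCvg.

Section Core.
Variable R : realType.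
Variable H : completeNormedModType R.
Variables (ip : H -> H -> R) (A : H -> nat -> R) (Astar : (nat -> R) -> H) (f : H).
Hypothesis hip : hilbert_inner_product ip.
Hypothesis hA : bounded_linear_to_c0 A.
Hypothesis hadj : is_adjoint ip A Astar.

Lemma ip_lin a x y z : ip (a *: x + y) z = a * ip x z + ip y z.
Proof. by case: hip => _ h _; apply: h. Qed.

Lemma ip_sym x y : ip x y = ip y x.
Proof. by case: hip => h _ _; apply: h. Qed.

Lemma ip_norm x : ip x x = `|x| ^+ 2.
Proof. by case: hip => _ _ h; apply: h. Qed.

Lemma ip_sub x y z : ip (x - y) z = ip x z - ip y z.
Proof.
have -> : x - y = (-1) *: y + x by rewrite scaleN1r addrC.
by rewrite ip_lin mulN1r addrC.
Qed.

Lemma ip_ext x y : (forall z, ip x z = ip y z) -> x = y.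
Proof.
move=> hxy; apply/eqP; rewrite -subr_eq0; apply/eqP.
have : ip (x - y) (x - y) = 0 by rewrite ip_sub hxy subrr.
by rewrite ip_norm => /eqP; rewrite sqrf_eq0 normr_eq0 => /eqP.
Qed.

Lemma A_lin a x y : A (a *: x + y) = (fun i => a * A x i + A y i).
Proof. by case: hA => h _ _; apply: h. Qed.

Lemma A_c0 z : is_c0 (A z).
Proof. by case: hA => _ h _; apply: h. Qed.

Lemma A_bnd z : exists B : R, forall i, `|A z i| <= B.
Proof. exact: c0_bounded (A_c0 z). Qed.

Lemma A_sub z w : A (z - w) = (fun i => A z i - A w i).
Proof.
have -> : z - w = (-1) *: w + z by rewrite scaleN1r addrC.
by rewrite A_lin; apply/funext => i; rewrite mulN1r addrC.
Qed.

Lemma A_zero : A 0 = (fun=> 0).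
Proof.
have := A_sub 0 0; rewrite subrr => ->; apply/funext => i; exact: subrr.
Qed.

Lemma pairing_Asub u z w : is_l1 u ->
  pairing u (A (z - w)) = pairing u (A z) - pairing u (A w).
Proof.
move=> hu; have [Bz hz] := A_bnd z; have [Bw hw] := A_bnd w.
rewrite A_sub.
have -> : (fun i => A z i - A w i) = (fun i => (-1) * A w i + A z i).
  by apply/funext => i; rewrite mulN1r addrC.
by rewrite (pairing_linx _ hu hw hz) mulN1r addrC.
Qed.

Lemma adjE u z : is_l1 u -> ip (Astar u) z = pairing u (A z).
Proof. by move=> hu; apply: hadj. Qed.

Lemma pairing_cvg_c0 (w : nat -> nat -> R) (ud : nat -> R) (M : R) (x : nat -> R) :
  (forall k, is_l1 (w k)) -> (forall k, l1norm (w k) <= M) ->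
  is_l1 ud -> l1norm ud <= M ->
  (forall i, w k i @[k --> \oo] --> ud i) -> is_c0 x ->
  pairing (w k) x @[k --> \oo] --> pairing ud x.
Proof.
move=> hw hwM hu huM hc hx.
have [B hB] := c0_bounded hx.
have M0 : 0 <= M by apply: le_trans (l1norm_ge0 hu) huM.
apply/cvgrPdist_le => e e0.
pose eta := e / (4 * (M + 1)).
have eta0 : 0 < eta by apply: divr_gt0 => //; apply: mulr_gt0 => //; rewrite ltr_wpDl.
have [N _ HN] := (cvgrPdist_le _ _).1 hx eta eta0.
have HK : forall i, (N <= i)%N -> `|x i| <= eta.
  by move=> i Ni; have := HN i Ni; rewrite /= sub0r normrN.
have hs : \sum_(0 <= i < N) w k i * x i @[k --> \oo] --> \sum_(0 <= i < N) ud i * x i.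
  by apply: sum_cvg => i; apply: cvgMr_tmp; apply: hc.
have e20 : 0 < e / 2 by rewrite divr_gt0.
have hs2 := (cvgrPdist_le _ _).1 hs (e / 2) e20.
near=> k.
have t1 := pairing_tail (hw k) hB HK.
have t2 := pairing_tail hu hB HK.
have b1 : (l1norm (w k) - psum (w k) N) * eta <= M * eta.
  apply: ler_wpM2r; first exact: ltW.
  by rewrite lerBlDr (le_trans (hwM k)) // lerDl psum_ge0.
have b2 : (l1norm ud - psum ud N) * eta <= M * eta.
  apply: ler_wpM2r; first exact: ltW.
  by rewrite lerBlDr (le_trans huM) // lerDl psum_ge0.
have Meta : M * eta * 2 <= e / 2.
  have M10 : M + 1 != 0 by rewrite gt_eqF // ltr_wpDl.
  have -> : M * eta * 2 = e / 2 * (M / (M + 1)) by rewrite /eta; field.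
  apply: ler_piMr; first by rewrite ltW.
  by rewrite ler_pdivrMr ?ltr_wpDl // mul1r lerDl.
have h3 : `|\sum_(0 <= i < N) ud i * x i - \sum_(0 <= i < N) w k i * x i| <= e / 2.
  near: k; exact: hs2.
rewrite -(subrK (\sum_(0 <= i < N) ud i * x i) (pairing ud x)).
rewrite -(subrK (\sum_(0 <= i < N) w k i * x i) (pairing (w k) x)).
set a := pairing ud x - _; set b := pairing (w k) x - _.
set c := \sum_(0 <= i < N) ud i * x i; set d := \sum_(0 <= i < N) w k i * x i.
have -> : a + c - (b + d) = a - b + (c - d) by rewrite opprD addrACA.
apply: le_trans (ler_normD _ _) _.
rewrite [X in _ <= X](splitr e); apply: lerD h3.
apply: le_trans (ler_normB _ _) _.
apply: le_trans (lerD (le_trans t2 b2) (le_trans t1 b1)) _.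
lra.
Unshelve. all: by end_near. Qed.

Lemma core (v : nat -> nat -> R) (M : R) :
  (forall k, is_l1 (v k)) -> (forall k, l1norm (v k) <= M) ->
  (forall z, pairing (v k) (A z) @[k --> \oo] --> ip f z) ->
  (forall w, is_l1 w -> Astar w = f -> forall e, 0 < e ->
     \forall k \near \oo, l1norm (v k) <= l1norm w + e) ->
  exists (phi : nat -> nat) (udag : nat -> R),
    sincr phi /\ is_l1 udag /\ Astar udag = f /\
    l1norm (fun i => v (phi k) i - udag i) @[k --> \oo] --> 0.
Proof.
move=> hv hvM hlim hsol.
have [phi [hphi hcv]] : exists phi : nat -> nat, sincr phi /\ forall i, cvgn (fun k => v (phi k) i).
  apply: (@diag _ v M) => k i; apply: le_trans (coord_le_l1 i (hv k)) (hvM k).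
pose w k := v (phi k).
pose ud i := limn (fun k => w k i).
have hc : forall i, w k i @[k --> \oo] --> ud i by move=> i; apply: hcv.
have hw : forall k, is_l1 (w k) by move=> k; apply: hv.
have hwM : forall k, l1norm (w k) <= M by move=> k; apply: hvM.
have fs1 : forall N, psum (w k) N @[k --> \oo] --> psum ud N.
  by move=> N; apply: sum_cvg => i; apply: cvg_norm; apply: hc.
have udM : forall N, psum ud N <= M.
  move=> N; rewrite -(cvg_lim _ (fs1 N)) //; apply: limr_le; first exact: cvgP (fs1 N).
  by near=> k; apply: le_trans (psum_le_l1 N (hw k)) (hwM k).
have hu : is_l1 ud by apply/l1P; exists M.
have huM : l1norm ud <= M by apply: l1_le.
have hsolu : Astar ud = f.
  apply: ip_ext => z; rewrite (adjE _ hu).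
  have h1 := pairing_cvg_c0 hw hwM hu huM hc (A_c0 z).
  have h2 : pairing (w k) (A z) @[k --> \oo] --> ip f z.
    exact: (@cvg_subseq _ (fun k => pairing (v k) (A z))).
  exact: (cvg_unique _ h1 h2).
exists phi, ud; split => //; split => //; split => //.
apply/cvgrPdist_le => e e0.
pose e' := e / 5.
have e'0 : 0 < e' by rewrite divr_gt0.
have [N _ HN] := (cvgrPdist_le _ _).1 (psum_cvg hu) e' e'0.
have HN' : l1norm ud - psum ud N <= e'.
  by have := HN N (leqnn N); rewrite /= => /(le_trans (ler_norm _)).
have fs2 : psum (fun i => w k i - ud i) N @[k --> \oo] --> 0.
  have -> : (0 : R) = \sum_(0 <= i < N) `|ud i - ud i| by rewrite big1 // => i _; rewrite subrr normr0.
  by apply: sum_cvg => i; apply: cvg_norm; apply: cvgB => //; exact: cvg_cst.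
have n1 := (cvgrPdist_le _ _).1 fs2 e' e'0.
have n2 := (cvgrPdist_le _ _).1 (fs1 N) e' e'0.
have n3 : \forall k \near \oo, l1norm (w k) <= l1norm ud + e'.
  have := hsol ud hu hsolu e' e'0; move=> [K _ HK].
  exists K => // k /= Kk; apply: HK; rewrite /=; apply: leq_trans Kk _.
  exact: sincr_ge.
near=> k.
have hd : is_l1 (fun i => w k i - ud i) by apply: l1_sub.
rewrite sub0r normrN ger0_norm; last exact: l1norm_ge0.
apply: l1_le => N'.
have a1 : `|0 - psum (fun i => w k i - ud i) N| <= e' by near: k; exact: n1.
have a2 : `|psum ud N - psum (w k) N| <= e' by near: k; exact: n2.
have a3 : l1norm (w k) <= l1norm ud + e' by near: k; exact: n3.
rewrite sub0r normrN ger0_norm in a1; last exact: psum_ge0.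
pose N'' := maxn N N'.
apply: le_trans (psum_nd _ (leq_maxr N N')) _.
rewrite (psum_split _ (leq_maxl N N')).
have s1 := psum_split (w k) (leq_maxl N N').
have s2 := psum_split ud (leq_maxl N N').
have b1 : \sum_(N <= i < N'') `|w k i - ud i| <=
    \sum_(N <= i < N'') `|w k i| + \sum_(N <= i < N'') `|ud i|.
  by rewrite -big_split /=; apply: ler_sum => i _; apply: ler_normB.
have b2 := psum_le_l1 N'' (hw k).
have b3 := psum_le_l1 N'' hu.
move: a2; rewrite ler_distl => /andP[a2 a2'].
have -> : e = 5 * e' by rewrite /e' mulrC divfK // pnatr_eq0.
move: s1 s2 b1 b2 b3 a1 a2 a2' a3 HN'; rewrite /N'' /w => s1 s2 b1 b2 b3 a1 a2 a2' a3 HN'.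
lra.
Unshelve. all: by end_near. Qed.

End Core.

Section Sup.
Variable R : realType.
Implicit Types (x y : nat -> R).

Definition bnd x := exists B : R, forall j, `|x j| <= B.

Lemma supnorm_ge' x j : bnd x -> `|x j| <= supnorm x.
Proof. by move=> [B hB]; apply: supnorm_ge hB. Qed.

Lemma bnd_add x y : bnd x -> bnd y -> bnd (fun j => x j + y j).
Proof.
move=> [B hB] [C hC]; exists (B + C) => j.
by apply: le_trans (ler_normD _ _) (lerD (hB j) (hC j)).
Qed.

Lemma bnd_scale a x : bnd x -> bnd (fun j => a * x j).
Proof.
move=> [B hB]; exists (`|a| * B) => j.
by rewrite normrM ler_wpM2l.
Qed.

Lemma supnormD x y : bnd x -> bnd y ->
  supnorm (fun j => x j + y j) <= supnorm x + supnorm y.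
Proof.
move=> hx hy; apply: supnorm_le => j.
by apply: le_trans (ler_normD _ _) (lerD (supnorm_ge' j hx) (supnorm_ge' j hy)).
Qed.

Lemma supnorm0 : supnorm (fun=> 0 : R) = 0.
Proof.
apply/le_anti; rewrite supnorm_ge0 andbT.
by apply: supnorm_le => j; rewrite normr0.
Qed.

Lemma supnormZ a x : bnd x -> supnorm (fun j => a * x j) = `|a| * supnorm x.
Proof.
move=> hx; apply/le_anti/andP; split.
  apply: supnorm_le => j; rewrite normrM ler_wpM2l //; exact: supnorm_ge'.
have [->|a0] := eqVneq a 0.
  by rewrite normr0 mul0r supnorm_ge0.
have na0 : 0 < `|a| by rewrite normr_gt0.
rewrite mulrC -ler_pdivlMr //; apply: supnorm_le => j.
rewrite ler_pdivlMr // mulrC -normrM.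
exact: supnorm_ge' j (bnd_scale a hx).
Qed.

Lemma supnormN x : bnd x -> supnorm (fun j => - x j) = supnorm x.
Proof.
move=> hx; have := supnormZ (-1) hx; rewrite normrN normr1 mul1r => <-.
by congr supnorm; apply/funext => j; rewrite mulN1r.
Qed.

Lemma supnorm_eq0 x : bnd x -> supnorm x = 0 -> x = (fun=> 0).
Proof.
move=> hx h0; apply/funext => j; apply/eqP; rewrite -normr_eq0 eq_le normr_ge0 andbT.
by rewrite -h0; apply: supnorm_ge'.
Qed.

Lemma cvg_bound (a s : nat -> R) (L C : R) :
  (forall k, `|a k - L| <= C * s k) -> s @ \oo --> 0 -> a @ \oo --> L.
Proof.
move=> hb hs.
have hCs : C * s k @[k --> \oo] --> C * 0 by exact: cvgMl_tmp hs.
rewrite mulr0 in hCs.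
apply/cvgrPdist_le => e e0.
have h1 := (cvgrPdist_le _ _).1 hCs e e0.
near=> k.
have h : `|0 - C * s k| <= e by near: k; exact: h1.
rewrite sub0r normrN in h; rewrite distrC; apply: le_trans (hb k) _.
by apply: le_trans (ler_norm _) h.
Unshelve. all: by end_near. Qed.

End Sup.

Section Hilb.
Variable R : realType.
Variable H : completeNormedModType R.
Variable ip : H -> H -> R.
Hypothesis hip : hilbert_inner_product ip.

Lemma ip0l z : ip 0 z = 0.
Proof.
have := ip_lin hip 1 0 0 z; rewrite scaler0 addr0 mul1r => h.
lra.
Qed.

Lemma ipZl a x z : ip (a *: x) z = a * ip x z.
Proof. by have := ip_lin hip a x 0 z; rewrite addr0 ip0l addr0. Qed.

Lemma ipDl x y z : ip (x + y) z = ip x z + ip y z.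
Proof. by have := ip_lin hip 1 x y z; rewrite scale1r mul1r. Qed.

Lemma CS x y : `|ip x y| <= `|x| * `|y|.
Proof.
have [->|y0] := eqVneq y 0.
  by rewrite (ip_sym hip) ip0l normr0 normr0 mulr0.
set a := ip x y; set X := `|x|; set Y := `|y|.
have Y0 : 0 < Y by rewrite normr_gt0.
pose u := Y ^+ 2 *: x + (- a) *: y.
have h1 : ip x u = Y ^+ 2 * X ^+ 2 - a * a.
  rewrite (ip_sym hip) ipDl !ipZl (ip_norm hip) (ip_sym hip y x).
  by rewrite mulNr.
have h2 : ip y u = 0.
  rewrite (ip_sym hip) ipDl !ipZl (ip_norm hip).
  by rewrite -/a mulNr mulrC subrr.
have h3 : ip u u = Y ^+ 2 * (Y ^+ 2 * X ^+ 2 - a * a).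
  by rewrite {1}/u ipDl !ipZl h1 h2 mulr0 addr0.
have h4 : 0 <= ip u u by rewrite (ip_norm hip) exprn_ge0.
rewrite h3 in h4.
have h5 : a * a <= Y ^+ 2 * X ^+ 2.
  by rewrite -subr_ge0; move: h4; rewrite pmulr_rge0 // exprn_gt0.
have h6 : `|a| ^+ 2 = a * a by rewrite real_normK ?num_real // expr2.
have hX : 0 <= X by rewrite normr_ge0.
have ha : 0 <= `|a| by rewrite normr_ge0.
have hXY : 0 <= X * Y by rewrite mulr_ge0 // ltW.
by rewrite -ler_sqr ?nnegrE // h6 exprMn [X ^+ 2 * _]mulrC.
Qed.

End Hilb.

Section OneStep.
Variable R : realType.

Lemma bnd_sub (x y : nat -> R) : bnd x -> bnd y -> bnd (fun j => x j - y j).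
Proof.
move=> [B hB] [C hC]; exists (B + C) => j.
by apply: le_trans (ler_normB _ _) (lerD (hB j) (hC j)).
Qed.

Lemma one_step (T : Type) (S : set T) (psi : T -> R) (L : T -> nat -> R) (C : R)
  (e : nat -> R) (p0 : T) :
  S p0 -> 0 <= C ->
  (forall p q a, S p -> S q -> exists r, [/\ S r, psi r = a * psi p + psi q &
      L r = (fun j => a * L p j + L q j)]) ->
  (forall p, S p -> bnd (L p)) -> bnd e ->
  (forall p, S p -> `|psi p| <= C * supnorm (L p)) ->
  exists c, forall p t, S p -> `|psi p + t * c| <= C * supnorm (fun j => L p j + t * e j).
Proof.
move=> Sp0 C0 hcl hbL hbe hbd.
have [r0 [Sr0 psir0 Lr0]] := hcl p0 p0 (-1) Sp0 Sp0.
rewrite mulN1r addNr in psir0.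
have Lr0' : L r0 = (fun=> 0) by rewrite Lr0; apply/funext => j; rewrite mulN1r addNr.
have hsc : forall p a, S p -> exists r, [/\ S r, psi r = a * psi p & L r = (fun j => a * L p j)].
  move=> p a Sp; have [r [Sr pr Lr]] := hcl p r0 a Sp Sr0.
  exists r; split => //; first by rewrite pr psir0 addr0.
  by rewrite Lr Lr0'; apply/funext => j; rewrite addr0.
pose sLm p := supnorm (fun j => L p j - e j).
pose sLp p := supnorm (fun j => L p j + e j).
pose E := [set psi p - C * sLm p | p in S].
have key : forall p q, S p -> S q -> psi p - C * sLm p <= C * sLp q - psi q.
  move=> p q Sp Sq; have [r [Sr pr Lr]] := hcl p q 1 Sp Sq.
  rewrite mul1r in pr.
  have h1 := hbd r Sr; rewrite pr Lr in h1.
  have h2 : supnorm (fun j => 1 * L p j + L q j) <= sLm p + sLp q.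
    have -> : (fun j => 1 * L p j + L q j) = (fun j => (L p j - e j) + (L q j + e j)).
      by apply/funext => j; rewrite mul1r addrACA addNr addr0.
    apply: supnormD.
      exact: bnd_sub (hbL p Sp) hbe.
    exact: bnd_add (hbL q Sq) hbe.
  have h3 : psi p + psi q <= C * (sLm p + sLp q).
    by apply: le_trans (ler_norm _) (le_trans h1 _); apply: ler_wpM2l.
  rewrite mulrDr in h3; lra.
have Ene : E !=set0 by exists (psi p0 - C * sLm p0), p0.
have Eub : ubound E (C * sLp p0 - psi p0) by move=> _ [p Sp <-]; apply: key.
have hsupE : has_sup E by split => //; exists (C * sLp p0 - psi p0).
pose c := sup E.
have clo : forall p, S p -> psi p - C * sLm p <= c.
  by move=> p Sp; apply: sup_upper_bound => //; exists p.
have chi : forall q, S q -> c <= C * sLp q - psi q.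
  by move=> q Sq; apply: ge_sup => // _ [p Sp <-]; apply: key.
have onesided : forall p t, S p -> psi p + t * c <= C * supnorm (fun j => L p j + t * e j).
  move=> p t Sp.
  have bLp := hbL p Sp.
  have [t0|t0|->] := ltgtP t 0; last first.
  - rewrite mul0r addr0; apply: le_trans (ler_norm _) _.
    have -> : (fun j => L p j + 0 * e j) = L p by apply/funext => j; rewrite mul0r addr0.
    exact: hbd.
  -
    have [q [Sq pq Lq]] := hsc p t^-1 Sp.
    have h := chi q Sq; rewrite /sLp Lq pq in h.
    have -> : (fun j => L p j + t * e j) = (fun j => t * (t^-1 * L p j + e j)).
      by apply/funext => j; rewrite mulrDr mulrA mulfV ?gt_eqF // mul1r.
    rewrite supnormZ; last by apply: bnd_add hbe; apply: bnd_scale.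
    rewrite gtr0_norm //.
    have := ler_wpM2l (ltW t0) h.
    rewrite mulrBr [t * (t^-1 * _)]mulrA mulfV ?gt_eqF // mul1r [t * (C * _)]mulrCA => h'.
    lra.
  -
    have s0 : 0 < - t by rewrite oppr_gt0.
    have [q [Sq pq Lq]] := hsc p (- t)^-1 Sp.
    have h := clo q Sq; rewrite /sLm Lq pq in h.
    have -> : (fun j => L p j + t * e j) = (fun j => (- t) * ((- t)^-1 * L p j - e j)).
      by apply/funext => j; rewrite mulrBr mulrA mulfV ?gt_eqF // mul1r mulNr opprK.
    rewrite supnormZ; last first.
      by apply: bnd_sub hbe; apply: bnd_scale.
    rewrite gtr0_norm //.
    have := ler_wpM2l (ltW s0) h.
    have e1 : - t * ((- t)^-1 * psi p) = psi p by rewrite mulrA mulfV ?gt_eqF // mul1r.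
    rewrite mulrBr e1 mulrCA => h'.
    lra.
exists c => p t Sp.
have [q [Sq pq Lq]] := hsc p (-1) Sp.
rewrite ler_norml; apply/andP; split; last exact: onesided.
have := onesided q (- t) Sq; rewrite pq Lq.
have -> : (fun j => -1 * L p j + - t * e j) = (fun j => - (L p j + t * e j)).
  by apply/funext => j; rewrite mulN1r mulNr opprD.
rewrite supnormN; last by apply: bnd_add (hbL p Sp) _; apply: bnd_scale.
rewrite mulN1r mulNr; lra.
Qed.

End OneStep.

Fixpoint iterc {R : Type} (z0 : R) (sf : nat * (nat -> R) -> R) (N : nat) : nat -> R :=
  if N is N'.+1 then
    (fun i => if i == N' then sf (N', iterc z0 sf N') else iterc z0 sf N' i)
  else fun=> z0.

Section HBc.
Variable R : realType.
Variable H : completeNormedModType R.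
Variables (ip : H -> H -> R) (A : H -> nat -> R).
Hypothesis hip : hilbert_inner_product ip.
Hypothesis hA : bounded_linear_to_c0 A.
Variables (V : set H) (n : nat) (g : H) (C : R).
Hypothesis hV : subspace_of_dim V n.
Hypothesis hC : 0 <= C.
Hypothesis hbase : forall z, V z -> `|ip z g| <= C * supnorm (A z).

Lemma V_lin a x y : V x -> V y -> V (a *: x + y).
Proof.
case: hV => e [_ ->] [c1 _ <-] [c2 _ <-].
exists (fun i => a * c1 i + c2 i) => //.
rewrite scaler_sumr -big_split /=; apply: eq_bigr => i _.
by rewrite scalerDl scalerA.
Qed.

Lemma V0 : V 0.
Proof.
case: hV => e [_ ->]; exists (fun=> 0) => //.
by apply: big1 => i _; rewrite scale0r.
Qed.

Definition Inv N (c : nat -> R) := forall z (t : nat -> R), V z ->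
  (forall i, (N <= i)%N -> t i = 0) ->
  `|ip z g + \sum_(0 <= i < N) t i * c i| <= C * supnorm (fun j => A z j + t j).

Lemma Inv_ext N c c' : (forall i, (i < N)%N -> c i = c' i) -> Inv N c -> Inv N c'.
Proof.
move=> hcc h z t Vz ht; have := h z t Vz ht.
by rewrite (@eq_big_nat _ _ _ 0 N _ (fun i => t i * c' i)) // => i /andP[_ iN]; rewrite hcc.
Qed.

Lemma Inv0 c : Inv 0 c.
Proof.
move=> z t Vz ht; rewrite big_geq // addr0.
have -> : (fun j => A z j + t j) = A z by apply/funext => j; rewrite ht // addr0.
exact: hbase.
Qed.

Lemma fin_bnd N (t : nat -> R) : (forall i, (N <= i)%N -> t i = 0) -> bnd t.
Proof.
move=> ht; exists (psum t N) => j.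
have [jN|Nj] := ltnP j N.
  apply: le_trans (coord_le_psum t j) _; exact: psum_nd.
by rewrite ht // normr0 psum_ge0.
Qed.

Lemma Inv_step N c : Inv N c -> exists x, Inv N.+1 (fun i => if i == N then x else c i).
Proof.
move=> hI.
pose S := fun p : H * (nat -> R) => V p.1 /\ forall i, (N <= i)%N -> p.2 i = 0.
pose psi := fun p : H * (nat -> R) => ip p.1 g + \sum_(0 <= i < N) p.2 i * c i.
pose L := fun (p : H * (nat -> R)) j => A p.1 j + p.2 j.
pose e := fun j : nat => if j == N then 1 else 0 : R.
have S0 : S (0, fun=> 0) by split => //; exact: V0.
have hcl : forall p q a, S p -> S q -> exists r, [/\ S r, psi r = a * psi p + psi q &
      L r = (fun j => a * L p j + L q j)].
  move=> [z1 t1] [z2 t2] a [/= V1 h1] [/= V2 h2].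
  exists (a *: z1 + z2, fun i => a * t1 i + t2 i); split.
  - split => /=; first exact: V_lin.
    by move=> i Ni; rewrite h1 // h2 // mulr0 addr0.
  - rewrite /psi /= (ip_lin hip) mulrDr addrACA; congr (_ + _).
    rewrite mulr_sumr -big_split /=; apply: eq_bigr => i _.
    by rewrite mulrDl mulrA.
  - rewrite /L /= (A_lin hA); apply/funext => j /=.
    by rewrite mulrDr addrACA.
have hbL : forall p, S p -> bnd (L p).
  move=> [z t] [/= Vz ht]; apply: bnd_add; first exact: c0_bounded (A_c0 hA z).
  exact: fin_bnd ht.
have hbe : bnd e by exists 1 => j; rewrite /e; case: ifP; rewrite ?normr1 ?normr0.
have hbd : forall p, S p -> `|psi p| <= C * supnorm (L p).
  by move=> [z t] [/= Vz ht]; apply: hI.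
have [x hx] := one_step S0 hC hcl hbL hbe hbd.
exists x => z t Vz ht.
pose t' := fun i => if i == N then 0 else t i.
have St' : S (z, t') by split => //= i Ni; rewrite /t'; case: eqP => // /eqP iN; apply: ht; rewrite ltn_neqAle eq_sym iN.
have := hx (z, t') (t N) St'.
rewrite /psi /L /= big_nat_recr //= eqxx.
have -> : \sum_(0 <= i < N) t' i * c i = \sum_(0 <= i < N) t i * (if i == N then x else c i).
  apply: eq_big_nat => i /andP[_ iN]; rewrite /t' ifN_eq ?ltn_eqF //.
have -> : (fun j => A z j + t' j + t N * e j) = (fun j => A z j + t j).
  apply/funext => j; rewrite /t' /e; case: (eqVneq j N) => [->|jN].
    by rewrite addr0 mulr1.
  by rewrite mulr0 addr0.
by rewrite addrA.
Qed.

Lemma HB_construct : exists c, [/\ is_l1 c, l1norm c <= C &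
  forall z, V z -> pairing c (A z) = ip z g].
Proof.
have hsf : forall Nc : nat * (nat -> R), exists x : R,
    Inv Nc.1 Nc.2 -> Inv Nc.1.+1 (fun i => if i == Nc.1 then x else Nc.2 i).
  move=> [N c] /=; have [hI|nI] := pselect (Inv N c).
    by have [x hx] := Inv_step hI; exists x.
  by exists 0.
have [sf hsfP] := choice hsf.
pose cs := iterc 0 sf.
have csI : forall N, Inv N (cs N).
  elim=> [|N IH]; first exact: Inv0.
  exact: (hsfP (N, cs N)).
have csA : forall N i, (i < N)%N -> cs N i = cs i.+1 i.
  elim=> // N IH i; rewrite ltnS leq_eqVlt => /orP[/eqP ->//|iN].
  transitivity (cs N i); last exact: IH.
  by rewrite /cs /= ltn_eqF.
pose c := fun i => cs i.+1 i.
have cI : forall N, Inv N c.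
  move=> N; apply: Inv_ext (csI N) => i iN; exact: csA.
have cpsum : forall N, psum c N <= C.
  move=> N.
  pose t := fun i => if (i < N)%N then Num.sg (c i) else 0.
  have ht : forall i, (N <= i)%N -> t i = 0 by move=> i Ni; rewrite /t ltnNge Ni.
  have := cI N 0 t V0 ht.
  rewrite (ip0l hip) add0r (A_zero hA).
  have -> : \sum_(0 <= i < N) t i * c i = psum c N.
    apply: eq_big_nat => i /andP[_ iN]; by rewrite /t iN -normrEsg.
  rewrite ger0_norm ?psum_ge0 // => h; apply: le_trans h _.
  rewrite -[X in _ <= X]mulr1; apply: ler_wpM2l => //.
  apply: supnorm_le => j; rewrite add0r /t; case: ifP => _; last by rewrite normr0.
  by rewrite normr_sg; case: (_ != _).
have cl1 : is_l1 c by apply/l1P; exists C.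
exists c; split => //; first exact: l1_le.
move=> z Vz.
pose x := A z.
have hx : is_c0 x := A_c0 hA z.
have [B hB] := c0_bounded hx.
pose s := fun N => supnorm (fun j => if (j < N)%N then 0 else x j).
have hb : forall N, `|series (fun i => c i * x i) N - ip z g| <= C * s N.
  move=> N; pose t := fun i => if (i < N)%N then - x i else 0.
  have ht : forall i, (N <= i)%N -> t i = 0 by move=> i Ni; rewrite /t ltnNge Ni.
  have := cI N z t Vz ht.
  have -> : (fun j => A z j + t j) = (fun j => if (j < N)%N then 0 else x j).
    by apply/funext => j; rewrite /t /x; case: ifP => _; rewrite ?subrr ?addr0.
  have -> : \sum_(0 <= i < N) t i * c i = - series (fun i => c i * x i) N.
    rewrite /series /= -sumrN; apply: eq_big_nat => i /andP[_ iN].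
    by rewrite /t iN mulNr mulrC.
  by rewrite distrC addrC.
have hs : s @ \oo --> 0.
  apply/cvgrPdist_le => eps eps0.
  have [N0 _ HN0] := (cvgrPdist_le _ _).1 hx eps eps0.
  exists N0 => // N /= N0N; rewrite sub0r normrN ger0_norm ?supnorm_ge0 //.
  apply: supnorm_le => j; case: ifPn => [_|]; first by rewrite normr0 ltW.
  rewrite -leqNgt => Nj; have := HN0 j (leq_trans N0N Nj); by rewrite /= sub0r normrN.
have h1 := cvg_bound hb hs.
have h2 : series (fun i => c i * x i) @ \oo --> pairing c x.
  exact: (cvgP _ (pairing_cvg cl1 hB)).
exact: (cvg_unique _ h2 h1).
Qed.

End HBc.

Section Kappa.
Variable R : realType.
Variable H : completeNormedModType R.
Variable A : H -> nat -> R.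
Hypothesis hA : bounded_linear_to_c0 A.

Lemma rV_entry n (v : 'rV[R]_n) i : `|v ord0 i| <= `|v|.
Proof.
rewrite [leRHS]/Num.norm /= mx_normrE; apply/bigmax_geP; right => /=.
by exists (ord0, i).
Qed.

Lemma A_sum n (c : 'I_n -> R) (e : 'I_n -> H) :
  A (\sum_(i < n) c i *: e i) = (fun j => \sum_(i < n) c i * A (e i) j).
Proof.
have : A (\sum_(i < n) c i *: e i) = \sum_(i < n) (fun j => c i * A (e i) j).
  apply: (big_rec2 (fun x y => A x = y)).
    by rewrite (A_zero hA); apply/funext => j.
  move=> i y1 y2 _ h; rewrite (A_lin hA) h; apply/funext => j.
  by rewrite fctE.
move=> ->; exact: fct_sumE.
Qed.

Lemma kappa_bound (Hn : nat -> set H) n :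
  subspace_of_dim (Hn n) n ->
  (forall z, Hn n z -> A z = (fun _ => 0) -> z = 0) ->
  forall z, Hn n z -> `|z| <= kappa A Hn n * supnorm (A z).
Proof.
move=> [e [hind hS]] hinj z hz.
have [->|z0] := eqVneq z 0.
  by rewrite normr0 (A_zero hA) supnorm0 mulr0.
pose a i := A (e i).
have abnd : forall i, bnd (a i) by move=> i; apply: c0_bounded; apply: (A_c0 hA).
pose Kb := \sum_(i < n) supnorm (a i).
pose F (v : 'rV[R]_n) := supnorm (fun j => \sum_(i < n) v ord0 i * a i j).
have Fbnd : forall v : 'rV[R]_n, bnd (fun j => \sum_(i < n) v ord0 i * a i j).
  move=> v; have := c0_bounded (A_c0 hA (\sum_(i < n) v ord0 i *: e i)).
  by rewrite A_sum.
have Flip : forall v w : 'rV[R]_n, F v <= F w + `|v - w| * Kb.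
  move=> v w; apply: supnorm_le => j.
  set x := \sum_(i < n) v ord0 i * a i j; set y := \sum_(i < n) w ord0 i * a i j.
  have -> : x = y + (x - y) by rewrite addrC subrK.
  apply: le_trans (ler_normD _ _) _; apply: lerD; first exact: supnorm_ge' (Fbnd w).
  rewrite /x /y -sumrB.
  apply: le_trans (ler_norm_sum _ _ _) _.
  rewrite /Kb mulr_sumr; apply: ler_sum => i _.
  rewrite -mulrBl normrM; apply: ler_pM => //.
    by have := rV_entry (v - w) i; rewrite !mxE.
  exact: supnorm_ge'.
have Fcont : continuous F.
  move=> v; apply/(@cvgrPdist_le _ _ _ (nbhs v) (nbhs_filter v)) => eps eps0.
  have r0 : 0 < eps / (Kb + 1).
    apply: divr_gt0 => //; apply: ltr_pwDr => //.
    by apply: sumr_ge0 => i _; apply: supnorm_ge0.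
  have hid : \forall w \near v, `|v - w| < eps / (Kb + 1).
    by move: r0; apply: (@cvgrPdist_lt _ _ _ (nbhs v) (nbhs_filter v) (fun x : 'rV[R]_n => x) v).1; exact: cvg_id.
  near=> w.
  have hw : `|v - w| < eps / (Kb + 1) by near: w; exact: hid.
  have Kb0 : 0 <= Kb by apply: sumr_ge0 => i _; apply: supnorm_ge0.
  have h1 := Flip v w; have h2 := Flip w v.
  rewrite distrC in h2.
  have h3 : `|v - w| * Kb <= eps.
    apply: le_trans (_ : eps / (Kb + 1) * Kb <= eps).
      by apply: ler_wpM2r => //; apply: ltW.
    rewrite mulrAC ler_pdivrMr ?ltr_pwDr //.
    by rewrite ler_pM2l // lerDl.
  rewrite ler_distl; apply/andP; split; lra.
pose S := [set v : 'rV[R]_n | `|v| = 1].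
have Scl : closed S.
  have -> : S = (fun v : 'rV[R]_n => `|v|) @^-1` [set 1 : R] by [].
  apply: closed_comp; last exact: closed_eq.
  by move=> x _; apply: norm_continuous.
have Sbd : bounded_set S.
  rewrite /= /bounded_near; near=> M => v /= ->.
  by near: M; apply: nbhs_pinfty_ge; rewrite num_real.
have Scp : compact S by apply: bounded_closed_compact.
have [c _ zc] : [set \sum_(i < n) c i *: e i | c in [set: 'I_n -> R]] z by rewrite -hS.
pose v := \row_(i < n) c i.
have vc : forall i, v ord0 i = c i by move=> i; rewrite mxE.
have v0 : v != 0.
  apply/eqP => v0; move/eqP: z0; apply; rewrite -zc.
  by apply: big1 => i _; rewrite -vc v0 mxE scale0r.
pose r := `|v|.
have r0 : 0 < r by rewrite normr_gt0.
pose v' := r^-1 *: v.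
have v'S : S v' by rewrite /S /= /v' normrZ normrV ?unitfE ?normr_id ?gt_eqF // mulVf ?gt_eqF.
have Fw : {within S, continuous F} by apply: continuous_subspaceT.
have [c0 c0S c0min] := EVT_min_rV (ex_intro _ v' v'S) Scp Fw.
rewrite inE in c0S.
have m0 : 0 < F c0.
  rewrite lt_neqAle supnorm_ge0 andbT; apply/eqP => /esym F0.
  have hx := supnorm_eq0 (Fbnd c0) F0.
  have : \sum_(i < n) c0 ord0 i *: e i = 0.
    apply: hinj; first by rewrite hS; exists (fun i => c0 ord0 i).
    by rewrite A_sum.
  move=> /hind c00.
  have : c0 = 0 by apply/matrixP => i j; rewrite (ord1 i) mxE c00.
  by move=> c0z; move: c0S; rewrite /S /= c0z normr0 => /eqP; rewrite eq_sym oner_eq0.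
have Fv : supnorm (A z) = r * F v'.
  rewrite -zc A_sum /F -(ger0_norm (ltW r0)) -supnormZ; last exact: Fbnd.
  congr supnorm; apply/funext => j.
  rewrite mulr_sumr; apply: eq_bigr => i _; rewrite /v' mxE -vc !mulrA mulfV ?gt_eqF //.
  by rewrite mul1r.
have hm : r * F c0 <= supnorm (A z).
  rewrite Fv; apply: ler_wpM2l; first exact: ltW.
  exact: (c0min v' (mem_set v'S)).
pose Ke := \sum_(i < n) `|e i|.
have hz1 : `|z| <= r * Ke.
  rewrite -zc; apply: le_trans (ler_norm_sum _ _ _) _.
  rewrite /Ke mulr_sumr; apply: ler_sum => i _; rewrite normrZ.
  by apply: ler_wpM2r => //; rewrite -vc; apply: rV_entry.
have sp : 0 < supnorm (A z) by apply: lt_le_trans hm; apply: mulr_gt0.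
have hub : forall y, [set `|x| / supnorm (A x) | x in Hn n `\ 0] y -> y <= Ke / F c0.
  move=> _ [x [hx x0] <-].
  have [d _ xd] : [set \sum_(i < n) c i *: e i | c in [set: 'I_n -> R]] x by rewrite -hS.
  pose w := \row_(i < n) d i.
  have wd : forall i, w ord0 i = d i by move=> i; rewrite mxE.
  have w0 : w != 0.
    apply/eqP => w0; apply: x0; rewrite /= -xd.
    by apply: big1 => i _; rewrite -wd w0 mxE scale0r.
  pose q := `|w|.
  have q0 : 0 < q by rewrite normr_gt0.
  pose w' := q^-1 *: w.
  have w'S : S w' by rewrite /S /= /w' normrZ normrV ?unitfE ?normr_id ?gt_eqF // mulVf ?gt_eqF.
  have Fwx : supnorm (A x) = q * F w'.
    rewrite -xd A_sum /F -(ger0_norm (ltW q0)) -supnormZ; last exact: Fbnd.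
    congr supnorm; apply/funext => j.
    rewrite mulr_sumr; apply: eq_bigr => i _; rewrite /w' mxE -wd !mulrA mulfV ?gt_eqF //.
    by rewrite mul1r.
  have hmx : q * F c0 <= supnorm (A x).
    rewrite Fwx; apply: ler_wpM2l; first exact: ltW.
    exact: (c0min w' (mem_set w'S)).
  have hx1 : `|x| <= q * Ke.
    rewrite -xd; apply: le_trans (ler_norm_sum _ _ _) _.
    rewrite /Ke mulr_sumr; apply: ler_sum => i _; rewrite normrZ.
    by apply: ler_wpM2r => //; rewrite -wd; apply: rV_entry.
  have spx : 0 < supnorm (A x) by apply: lt_le_trans hmx; apply: mulr_gt0.
  rewrite ler_pdivrMr // mulrAC ler_pdivlMr //.
  apply: le_trans (_ : q * Ke * F c0 <= _).
    by apply: ler_wpM2r => //; apply: ltW.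
  rewrite mulrAC [Ke * _]mulrC; apply: ler_wpM2r => //.
  by apply: sumr_ge0 => i _.
have hsup : `|z| / supnorm (A z) <= kappa A Hn n.
  apply: ub_le_sup; first by exists (Ke / F c0) => y; apply: hub.
  by exists z => //; split => //; apply/eqP.
by rewrite -ler_pdivrMr.
Unshelve. all: by end_near. Qed.

End Kappa.

Section Extra.
Variable R : realType.

Lemma l1norm_add (u v : nat -> R) : is_l1 u -> is_l1 v ->
  l1norm (fun i => u i + v i) <= l1norm u + l1norm v.
Proof.
move=> hu hv; apply: l1_le => N.
apply: le_trans (lerD (psum_le_l1 N hu) (psum_le_l1 N hv)).
rewrite /psum -big_split /=; apply: ler_sum => i _; exact: ler_normD.
Qed.

Lemma l1_zero : is_l1 (fun=> 0 : R).
Proof. by apply/l1P; exists 0 => N; rewrite /psum big1 // => i _; rewrite normr0. Qed.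

Lemma l1norm_zero : l1norm (fun=> 0 : R) = 0.
Proof.
apply/le_anti; rewrite l1norm_ge0 ?andbT; last exact: l1_zero.
by apply: l1_le => N; rewrite /psum big1 // => i _; rewrite normr0.
Qed.

Lemma pairing_zero (x : nat -> R) : pairing (fun=> 0) x = 0.
Proof.
rewrite /pairing.
have -> : series (fun i => (0 : R) * x i) = fun=> 0.
  by apply/funext => N; rewrite /series /= big1 // => i _; rewrite mul0r.
exact: lim_cst.
Qed.

Lemma cvg_index (a : nat -> R) (nk : nat -> nat) : a @ \oo --> 0 ->
  (forall N, \forall k \near \oo, (N <= nk k)%N) -> (fun k => a (nk k)) @ \oo --> 0.
Proof.
move=> ha hnk; apply/cvgrPdist_le => e e0.
have [N0 _ HN0] := (cvgrPdist_le _ _).1 ha e e0.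
by apply: filterS (hnk N0) => k Nk; apply: HN0.
Qed.

Lemma sup_ge0 (E : set R) : (forall y, E y -> 0 <= y) -> 0 <= sup E.
Proof.
move=> hE; have [hs|nhs] := pselect (has_sup E); last by rewrite sup_out.
have [[y Ey] _] := hs; apply: le_trans (hE y Ey) _.
exact: sup_upper_bound.
Qed.

End Extra.

Section MainSec.
Variable R : realType.
Variable H : completeNormedModType R.
Variables (ip : H -> H -> R) (A : H -> nat -> R) (Astar : (nat -> R) -> H).
Variables (Hn : nat -> set H) (f : H).
Hypothesis hip : hilbert_inner_product ip.
Hypothesis hA : bounded_linear_to_c0 A.
Hypothesis hadj : is_adjoint ip A Astar.
Hypothesis hdim : forall n, subspace_of_dim (Hn n) n.

Lemma kappa_ge0 n : 0 <= kappa A Hn n.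
Proof.
apply: sup_ge0 => _ [z _ <-]; apply: divr_ge0 => //; exact: supnorm_ge0.
Qed.

Lemma approx z : inf [set supnorm (A (z - w)) | w in Hn n] @[n --> \oo] --> 0 ->
  exists zs : nat -> H, (forall n, Hn n (zs n)) /\ supnorm (A (z - zs n)) @[n --> \oo] --> 0.
Proof.
move=> hinf.
pose I n := inf [set supnorm (A (z - w)) | w in Hn n].
have hw : forall n, exists w, Hn n w /\ supnorm (A (z - w)) <= I n + harmonic n.
  move=> n; set E := [set supnorm (A (z - w)) | w in Hn n].
  have hE : has_inf E.
    split; first by exists (supnorm (A (z - 0))), 0 => //; exact: V0 (hdim n).
    by exists 0 => _ [w _ <-]; exact: supnorm_ge0.
  have [_ [w Hw <-] hlt] := inf_adherent (harmonic_gt0 n) hE.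
  by exists w; split => //; apply: ltW.
have [zs hzs] := choice hw.
exists zs; split; first by move=> n; case: (hzs n).
apply: (@squeeze_cvgr _ _ _ _ (fun=> 0) (fun n => I n + harmonic n)).
- near=> n; apply/andP; split; first exact: supnorm_ge0.
  by case: (hzs n).
- exact: cvg_cst.
- by rewrite -(addr0 0); apply: cvgD => //; exact: cvg_harmonic.
Unshelve. all: by end_near. Qed.

Lemma main_gen (nk : nat -> nat) (fd : nat -> H) (um ck : nat -> nat -> R)
    (kd : nat -> R) (u0 : nat -> R) :
  is_l1 u0 -> Astar u0 = f ->
  (forall z, inf [set supnorm (A (z - w)) | w in Hn n] @[n --> \oo] --> 0) ->
  (forall N, \forall k \near \oo, (N <= nk k)%N) ->
  (forall k, is_min_l1_solution ip Astar (Hn (nk k)) (fd k) (um k)) ->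
  (forall k, is_l1 (ck k)) -> (forall k, l1norm (ck k) <= kd k) ->
  (forall k z, Hn (nk k) z -> pairing (ck k) (A z) = ip z (fd k - f)) ->
  kd @ \oo --> 0 ->
  exists (phi : nat -> nat) (udag : nat -> R),
    {homo phi : k l / (k < l)%N >-> (k < l)%N} /\
    is_l1 udag /\ Astar udag = f /\
    l1norm (fun i => um (phi k) i - udag i) @[k --> \oo] --> 0.
Proof.
move=> hu0 Au0 hinf hnk hmin hck hckn hckp hkd.
have [B hB] : exists B : R, forall k, `|kd k| <= B.
  have := cvg_has_ub (cvgP _ hkd); move=> [B HB]; exists B => k; apply: HB; by exists k.
have kd0 : forall k, 0 <= kd k by move=> k; apply: le_trans (hckn k); apply: l1norm_ge0.
have hum : forall k, is_l1 (um k) by move=> k; case: (hmin k).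
have feas : forall k w, is_l1 w -> Astar w = f ->
    l1norm (um k) <= l1norm w + kd k.
  move=> k w hw Aw; case: (hmin k) => _ _ hopt.
  have hv := l1_add hw (hck k).
  apply: le_trans (hopt _ hv _) _.
    move=> z hz; rewrite (ip_sym hip) (adjE hadj _ hv).
    have -> : (fun i => w i + ck k i) = (fun i => 1 * w i + ck k i) by apply/funext => i; rewrite mul1r.
    rewrite (@pairing_linu _ w (ck k) (A z) 1 _ hw (hck k) (fun i => c0_supnorm i (A_c0 hA z))).
    rewrite mul1r -(adjE hadj _ hw) Aw hckp // (ip_sym hip z (fd k - f)) (ip_sub hip).
    by rewrite (ip_sym hip f) (ip_sym hip (fd k)) addrC subrK.
  apply: le_trans (l1norm_add hw (hck k)) _.
  by apply: lerD => //; exact: hckn.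
pose M := l1norm u0 + B.
have hM : forall k, l1norm (um k) <= M.
  move=> k; apply: le_trans (feas k u0 hu0 Au0) _.
  by rewrite lerD2l; apply: le_trans (ler_norm _) (hB k).
have B0 : 0 <= B by apply: le_trans (normr_ge0 _) (hB 0%N).
have M0 : 0 <= M by apply: addr_ge0 => //; exact: l1norm_ge0.
apply: (@core _ _ ip A Astar f hip hA hadj um M) => //.
- move=> z.
  have [zs [hzs hzc]] := approx (hinf z).
  pose zk k := zs (nk k).
  pose a k := supnorm (A (z - zk k)).
  have ha : a @ \oo --> 0 by apply: cvg_index hzc hnk.
  have hAz := A_c0 hA z.
  pose K := M + l1norm u0 + supnorm (A z) + B.
  apply: (@cvg_bound _ _ (fun k => a k + kd k) _ K); last first.
    by rewrite -(addr0 0); apply: cvgD.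
  move=> k.
  have hzk : Hn (nk k) (zk k) := hzs (nk k).
  have e1 : pairing (um k) (A (zk k)) = pairing u0 (A (zk k)) + pairing (ck k) (A (zk k)).
    rewrite -(adjE hadj _ (hum k)) (ip_sym hip).
    case: (hmin k) => _ hcons _; rewrite hcons // hckp // -(adjE hadj _ hu0) Au0.
    by rewrite (ip_sym hip (zk k) (fd k - f)) (ip_sub hip) !(ip_sym hip _ (zk k)) addrC subrK.
  have e2 := pairing_Asub hA z (zk k) (hum k).
  have e3 := pairing_Asub hA z (zk k) hu0.
  have e4 := pairing_Asub hA z (zk k) (hck k).
  have hAzk : forall i, `|A (z - zk k) i| <= a k by move=> i; exact: c0_supnorm (A_c0 hA _).
  have b1 := pairing_bound (hum k) hAzk.
  have b2 := pairing_bound hu0 hAzk.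
  have b3 := pairing_bound (hck k) hAzk.
  have b4 := pairing_bound (hck k) (fun i => c0_supnorm i hAz).
  have ip_fz : ip f z = pairing u0 (A z) by rewrite -Au0 (adjE hadj _ hu0).
  rewrite ip_fz.
  have -> : pairing (um k) (A z) - pairing u0 (A z) =
      pairing (um k) (A (z - zk k)) - pairing u0 (A (z - zk k))
      + pairing (ck k) (A z) - pairing (ck k) (A (z - zk k)).
    rewrite e2 e3 e4 e1; lra.
  have a0 : 0 <= a k by apply: supnorm_ge0.
  have s0 : 0 <= supnorm (A z) by apply: supnorm_ge0.
  have l0 : 0 <= l1norm u0 by apply: l1norm_ge0.
  have hmk := hM k; have hck0 := hckn k; have hBk : kd k <= B by apply: le_trans (ler_norm _) (hB k).
  have c0 : 0 <= l1norm (ck k) by apply: l1norm_ge0.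
  have m1 : l1norm (um k) * a k <= M * a k by apply: ler_wpM2r.
  have m2 : l1norm (ck k) * a k <= B * a k.
    by apply: ler_wpM2r => //; apply: le_trans hck0 hBk.
  have m3 : l1norm (ck k) * supnorm (A z) <= kd k * supnorm (A z) by apply: ler_wpM2r.
  have t1 := ler_normD (pairing (um k) (A (z - zk k)) - pairing u0 (A (z - zk k)) + pairing (ck k) (A z)) (- pairing (ck k) (A (z - zk k))).
  have t2 := ler_normD (pairing (um k) (A (z - zk k)) - pairing u0 (A (z - zk k))) (pairing (ck k) (A z)).
  have t3 := ler_normB (pairing (um k) (A (z - zk k))) (pairing u0 (A (z - zk k))).
  rewrite normrN in t1.
  have hK : K * (a k + kd k) = M * a k + l1norm u0 * a k + supnorm (A z) * a k + B * a k
      + (M * kd k + l1norm u0 * kd k + supnorm (A z) * kd k + B * kd k).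
    by rewrite /K; ring.
  rewrite hK.
  have p1 : 0 <= M * kd k by apply: mulr_ge0.
  have p2 : 0 <= l1norm u0 * kd k by apply: mulr_ge0.
  have p3 : 0 <= B * kd k by apply: mulr_ge0.
  have p4 : 0 <= supnorm (A z) * a k by apply: mulr_ge0.
  rewrite [supnorm (A z) * kd k]mulrC in m3 *.
  lra.
- move=> w hw Aw e e0.
  have h1 := (cvgrPdist_le _ _).1 hkd e e0.
  near=> k.
  have hk : `|0 - kd k| <= e by near: k; exact: h1.
  rewrite sub0r normrN in hk; apply: le_trans (feas k w hw Aw) _.
  by rewrite lerD2l; apply: le_trans (ler_norm _) hk.
Unshelve. all: by end_near. Qed.

End MainSec.

Unset Implicit Arguments.

Theorem theorem1 (R : realType) (H : completeNormedModType R)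
  (ip : H -> H -> R) (A : H -> nat -> R) (Astar : (nat -> R) -> H)
  (Hn : nat -> set H) (P : nat -> H -> H) (f : H) :
  hilbert_inner_product ip ->
  bounded_linear_to_c0 A ->
  is_adjoint ip A Astar ->
  (forall n, subspace_of_dim (Hn n) n) ->
  (forall n, is_orth_proj ip (Hn n) (P n)) ->
  (forall v, P n v @[n --> \oo] --> v) ->
  (forall n z, Hn n z -> A z = (fun _ => 0) -> z = 0) ->
  (exists u, is_l1 u /\ Astar u = f) ->
  (forall z, inf [set supnorm (A (z - w)) | w in Hn n] @[n --> \oo] --> 0) ->
  (* (a) *)
  (forall ud : nat -> nat -> R,
     (forall n, is_min_l1_solution ip Astar (Hn n) f (ud n)) ->
     exists (phi : nat -> nat) (udag : nat -> R),
       {homo phi : k l / (k < l)%N >-> (k < l)%N} /\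
       is_l1 udag /\ Astar udag = f /\
       l1norm (fun i => ud (phi k) i - udag i) @[k --> \oo] --> 0)
  /\
  (* (b) *)
  (forall (nAP : R -> nat) (delta : nat -> R) (fd : nat -> H) (um : nat -> nat -> R),
     (forall N : nat, \forall d \near 0^'+, (N <= nAP d)%N) ->
     d * kappa A Hn (nAP d) @[d --> 0^'+] --> 0 ->
     (forall m, 0 < delta m) ->
     delta m @[m --> \oo] --> 0 ->
     (forall m, `|fd m - f| <= delta m) ->
     (forall m, is_min_l1_solution ip Astar (Hn (nAP (delta m))) (fd m) (um m)) ->
     exists (phi : nat -> nat) (udag : nat -> R),
       {homo phi : k l / (k < l)%N >-> (k < l)%N} /\
       is_l1 udag /\ Astar udag = f /\
       l1norm (fun i => um (phi k) i - udag i) @[k --> \oo] --> 0).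
Proof.
move=> hip hA hadj hdim _ _ hinj [u0 [hu0 Au0]] hinf; split.
- move=> ud hud.
  apply: (@main_gen _ _ ip A Astar Hn f hip hA hadj hdim id (fun=> f) ud
     (fun _ => fun=> 0) (fun=> 0) u0) => //.
  + by move=> N; exact: nbhs_infty_ge.
  + by move=> k; exact: l1_zero.
  + by move=> k; rewrite l1norm_zero.
  + by move=> k z _; rewrite pairing_zero subrr (ip_sym hip) ip0l.
  + exact: cvg_cst.
- move=> nAP delta fd um hn hkap hpos hdel hfd hum.
  have hdr : delta k @[k --> \oo] --> 0^'+.
    move=> Q hQ; have [N _ HN] := hdel _ hQ; exists N => // k Nk; apply: (HN k Nk); exact: hpos.
  pose nk k := nAP (delta k).
  have hnk : forall N, \forall k \near \oo, (N <= nk k)%N.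
    by move=> N; exact: (hdr _ (hn N)).
  pose kd k := delta k * kappa A Hn (nk k).
  have hkd : kd @ \oo --> 0.
    exact: (cvg_comp _ (fun d => d * kappa A Hn (nAP d)) hdr hkap).
  have hc : forall k, exists c, [/\ is_l1 c, l1norm c <= kappa A Hn (nk k) * `|fd k - f| &
      forall z, Hn (nk k) z -> pairing c (A z) = ip z (fd k - f)].
    move=> k; apply: (HB_construct hip hA (hdim (nk k))).
      by apply: mulr_ge0; [exact: kappa_ge0 | exact: normr_ge0].
    move=> z hz; apply: le_trans (CS hip z (fd k - f)) _.
    rewrite mulrAC; apply: ler_wpM2r => //.
    exact: (kappa_bound hA (hdim (nk k)) (hinj (nk k))).
  have [ck hck] := choice hc.
  apply: (@main_gen _ _ ip A Astar Hn f hip hA hadj hdim nk fd um ck kd u0) => //.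
  + by move=> k; case: (hck k).
  + move=> k; case: (hck k) => _ h _; apply: le_trans h _.
    by rewrite /kd [X in _ <= X]mulrC; apply: ler_wpM2l => //; exact: kappa_ge0.
  + by move=> k; case: (hck k).
Qed.
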